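(* Let $M$ be a symmetric homogeneous stable mean having a symmetric asymptotic expansion with coefficients $(a_n)_{n\ge0}$. Then $a_0=1$, $a_1\in\mathbb R$ is arbitrary (free), and for $m\ge2$ $$a_m=\frac{2^{2m-1}}{2^{2m-2}-1}\Big(\frac12\sum_{n=1}^{m-1}a_n\sum_{k=0}^{2m-2n}P[k,2n,\mathbf g]P[2m-2n-k,-2n+1,\mathbf h]+\sum_{n=1}^{m-1}a_n\sum_{k=0}^{m-n}P[k,2n,\mathbf d]P[m-n-k,-2n+1,\mathbf s]\Big),$$ where $\mathbf g=(1,a_1,0,a_2,0,\ldots)$, $\mathbf h=(2,-1,a_1,0,a_2,0,\ldots)$, and $\mathbf d,\mathbf s$ are given by $d_m=-\frac12\sum_{n=0}^m a_n\sum_{k=0}^{2m+1-2n}P[k,2n,\mathbf g]P[2m+1-2n-k,-2n+1,\mathbf h]$ and $s_m=\frac12\sum_{n=0}^m a_n\sum_{k=0}^{2m-2n}P[k,2n,\mathbf g]P[2m-2n-k,-2n+1,\mathbf h]$. In particular all $a_m$, $m\ge2$, are determined by $a_1$ (the right-hand side involves only $a_1,\dots,a_{m-1}$).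
   Context: A bi-variate mean is $M:(0,\infty)^2\to(0,\infty)$ with $\min(s,t)\le M(s,t)\le\max(s,t)$; symmetric: $M(s,t)=M(t,s)$; homogeneous: $M(\lambda s,\lambda t)=\lambda M(s,t)$. $M$ is stable if $M(s,t)=M\big(M(s,M(s,t)),M(M(s,t),t)\big)$ for all $s,t>0$. $M$ has a symmetric asymptotic expansion with coefficients $(a_n)$ if for every fixed real $t$ and every $N\ge0$, $M(x-t,x+t)=\sum_{n=0}^Na_nt^{2n}x^{-2n+1}+o(x^{-2N+1})$ as $x\to\infty$. For a sequence $\mathbf b$ with $b_0\ne0$, $r\in\mathbb R$: $P[0,r,\mathbf b]=b_0^r$, $P[n,r,\mathbf b]=\frac1{nb_0}\sum_{k=1}^n(k(1+r)-n)b_kP[n-k,r,\mathbf b]$ ($n\ge1$), the coefficient of $z^n$ in $(\sum_jb_jz^j)^r$. In $\mathbf g$: $g_0=1$, $g_{2k-1}=a_k$, $g_{2k}=0$; in $\mathbf h$: $h_0=2$, $h_1=-1$, $h_{2k}=a_k$, $h_{2k+1}=0$ ($k\ge1$). *)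

(* Defs.v *)
From Stdlib Require Import Reals Lra Lia.
From Coquelicot Require Import Coquelicot.
Open Scope R_scope.

(* sum_range lo hi f = sum_{k=lo}^{hi} f k  (empty, = 0, when hi < lo) *)
Fixpoint sumR (m : nat) (f : nat -> R) : R :=
  match m with
  | O => 0
  | S m' => sumR m' f + f m'
  end.

Definition sum_range (lo hi : nat) (f : nat -> R) : R :=
  sumR (S hi - lo) (fun j => f (lo + j)%nat).

Fixpoint Pfuel (fuel n : nat) (r : R) (b : nat -> R) : R :=
  match fuel with
  | O => Rpower (b O) r
  | S f =>
    match n with
    | O => Rpower (b O) r
    | S _ =>
      / (INR n * b O) *
      sum_range 1 n (fun k => (INR k * (1 + r) - INR n) * b k * Pfuel f (n - k) r b)
    end
  end.

Definition P (n : nat) (r : R) (b : nat -> R) : R := Pfuel n n r b.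

Definition gseq (a : nat -> R) (j : nat) : R :=
  match j with
  | O => 1
  | _ => if Nat.odd j then a (Nat.div2 (S j)) else 0
  end.

Definition hseq (a : nat -> R) (j : nat) : R :=
  match j with
  | O => 2
  | S O => -1
  | _ => if Nat.even j then a (Nat.div2 j) else 0
  end.

Definition dseq (a : nat -> R) (m : nat) : R :=
  - / 2 * sum_range 0 m (fun n => a n *
      sum_range 0 (2 * m + 1 - 2 * n) (fun k =>
        P k (2 * INR n) (gseq a) * P (2 * m + 1 - 2 * n - k) (- 2 * INR n + 1) (hseq a))).

Definition sseq (a : nat -> R) (m : nat) : R :=
  / 2 * sum_range 0 m (fun n => a n *
      sum_range 0 (2 * m - 2 * n) (fun k =>
        P k (2 * INR n) (gseq a) * P (2 * m - 2 * n - k) (- 2 * INR n + 1) (hseq a))).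

Definition is_mean (M : R -> R -> R) : Prop :=
  forall s t, 0 < s -> 0 < t -> Rmin s t <= M s t <= Rmax s t.

Definition symmetric_mean (M : R -> R -> R) : Prop :=
  forall s t, 0 < s -> 0 < t -> M s t = M t s.

Definition homogeneous_mean (M : R -> R -> R) : Prop :=
  forall l s t, 0 < l -> 0 < s -> 0 < t -> M (l * s) (l * t) = l * M s t.

Definition stable_mean (M : R -> R -> R) : Prop :=
  forall s t, 0 < s -> 0 < t ->
    M s t = M (M s (M s t)) (M (M s t) t).

Definition has_sym_asymp_expansion (M : R -> R -> R) (a : nat -> R) : Prop :=
  forall (t : R) (N : nat),
    is_lim
      (fun x => (M (x - t) (x + t)
                 - sum_range 0 N (fun n => a n * t ^ (2 * n) * powerRZ x (1 - 2 * Z.of_nat n)))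
                / powerRZ x (1 - 2 * Z.of_nat N))
      p_infty 0.

(* Main.v *)
Require Import Defs.
From Stdlib Require Import Reals Lra Lia FunctionalExtensionality.
From Coquelicot Require Import Coquelicot.
Open Scope R_scope.


Lemma sumR_ext_lt m f g : (forall k, (k < m)%nat -> f k = g k) -> sumR m f = sumR m g.
Proof. induction m; simpl; intros H; auto. rewrite IHm by (intros; apply H; lia). rewrite H by lia; auto. Qed.

Lemma sumR_ext m f g : (forall k, f k = g k) -> sumR m f = sumR m g.
Proof. intros; apply sumR_ext_lt; auto. Qed.

Lemma sumR_first m f : sumR (S m) f = f O + sumR m (fun j => f (S j)).
Proof. induction m; simpl in *; [ring|]. rewrite IHm; ring. Qed.

Lemma sumR_plus m f g : sumR m (fun k => f k + g k) = sumR m f + sumR m g.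
Proof. induction m; simpl; [ring|]. rewrite IHm; ring. Qed.

Lemma sumR_scal_l m x f : sumR m (fun k => x * f k) = x * sumR m f.
Proof. induction m; simpl; [ring|]. rewrite IHm; ring. Qed.

Lemma sumR_scal_r m x f : sumR m (fun k => f k * x) = sumR m f * x.
Proof. induction m; simpl; [ring|]. rewrite IHm; ring. Qed.

Lemma sumR_opp m f : sumR m (fun k => - f k) = - sumR m f.
Proof. induction m; simpl; [ring|]. rewrite IHm; ring. Qed.

Lemma sumR_zero m f : (forall k, (k < m)%nat -> f k = 0) -> sumR m f = 0.
Proof. intros H; rewrite (sumR_ext_lt m f (fun _ => 0)) by auto. induction m; simpl; [ring|]. rewrite IHm; auto; ring. Qed.

Lemma sumR_extend m p f : (forall k, (m <= k)%nat -> (k < m + p)%nat -> f k = 0) -> sumR (m + p) f = sumR m f.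
Proof. induction p; intros H. rewrite Nat.add_0_r; auto.
  rewrite Nat.add_succ_r; simpl. rewrite IHp by (intros; apply H; lia). rewrite H by lia. ring. Qed.

Lemma sumR_extend_le m m' f : (m <= m')%nat -> (forall k, (m <= k)%nat -> (k < m')%nat -> f k = 0) -> sumR m' f = sumR m f.
Proof. intros Hle H. replace m' with (m + (m' - m))%nat by lia. apply sumR_extend. intros; apply H; lia. Qed.

Lemma sumR_single N i F : (i < N)%nat -> (forall n, (n < N)%nat -> n <> i -> F n = 0) -> sumR N F = F i.
Proof. induction N; intros Hi H. lia. simpl. destruct (Nat.eq_dec i N) as [->|Hne].
  rewrite sumR_zero. ring. intros; apply H; lia.
  rewrite IHN by (try lia; intros; apply H; lia). rewrite (H N) by lia. ring. Qed.

Lemma sumR_rev m f : sumR m f = sumR m (fun k => f (m - 1 - k)%nat).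
Proof. induction m. reflexivity.
  rewrite (sumR_first m (fun k => f (S m - 1 - k)%nat)). change (sumR (S m) f) with (sumR m f + f m).
  rewrite IHm. replace (S m - 1 - 0)%nat with m by lia.
  rewrite Rplus_comm. f_equal. apply sumR_ext; intros k. f_equal. lia. Qed.

Lemma sumR_tri n F : sumR (S n) (fun i => sumR (S i) (fun k => F i k)) = sumR (S n) (fun k => sumR (S (n - k)) (fun j => F (k + j)%nat k)).
Proof. induction n.
  - simpl. replace (0+0)%nat with 0%nat by lia. ring.
  - 
    change (sumR (S (S n)) (fun i => sumR (S i) (fun k => F i k))) with
      (sumR (S n) (fun i => sumR (S i) (fun k => F i k)) + sumR (S (S n)) (fun k => F (S n) k)).
    rewrite IHn.
    change (sumR (S (S n)) (fun k => sumR (S (S n - k)) (fun j => F (k + j)%nat k))) with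
      (sumR (S n) (fun k => sumR (S (S n - k)) (fun j => F (k + j)%nat k)) + sumR (S (S n - S n)) (fun j => F (S n + j)%nat (S n))).
    rewrite (sumR_ext_lt (S n) (fun k => sumR (S (S n - k)) (fun j => F (k + j)%nat k))
      (fun k => sumR (S (n - k)) (fun j => F (k + j)%nat k) + F (S n) k)).
    2:{ intros k Hk. replace (S n - k)%nat with (S (n - k)) by lia. simpl. replace (k + S (n - k))%nat with (S n) by lia. reflexivity. }
    rewrite sumR_plus. replace (S n - S n)%nat with 0%nat by lia.
    replace (sumR (S 0) (fun j => F (S n + j)%nat (S n))) with (F (S n) (S n)) by (simpl; rewrite Nat.add_0_r; ring).
    change (sumR (S (S n)) (fun k => F (S n) k)) with (sumR (S n) (fun k => F (S n) k) + F (S n) (S n)).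
    rewrite Rplus_assoc; reflexivity.
Qed.

Definition conv (c e : nat -> R) (n : nat) : R := sumR (S n) (fun k => c k * e (n - k)%nat).
Definition shift (c : nat -> R) (j : nat) : R := c (S j).
Definition delta (j : nat) : R := match j with O => 1 | _ => 0 end.
Definition zd (c : nat -> R) (j : nat) : R := INR j * c j.
Definition shiftR (p : nat) (c : nat -> R) (j : nat) : R := if (p <=? j)%nat then c (j - p)%nat else 0.

Lemma conv_0 c e : conv c e 0 = c 0%nat * e 0%nat.
Proof. unfold conv; simpl; ring. Qed.

Lemma conv_S c e n : conv c e (S n) = c 0%nat * e (S n) + conv (shift c) e n.
Proof. unfold conv. rewrite sumR_first. reflexivity. Qed.

Lemma conv_comm c e : conv c e = conv e c.
Proof. apply functional_extensionality; intros n. unfold conv.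
  rewrite sumR_rev. apply sumR_ext_lt; intros k Hk. replace (S n - 1 - k)%nat with (n - k)%nat by lia.
  replace (n - (n - k))%nat with k by lia. ring. Qed.

Lemma conv_assoc a b c : conv (conv a b) c = conv a (conv b c).
Proof. apply functional_extensionality; intros n. unfold conv.
  rewrite (sumR_ext _ _ (fun i => sumR (S i) (fun k => a k * b (i - k)%nat * c (n - i)%nat))).
  2:{ intros i. rewrite <- sumR_scal_r. reflexivity. }
  rewrite sumR_tri. apply sumR_ext; intros k. rewrite <- sumR_scal_l. apply sumR_ext; intros j.
  replace (k + j - k)%nat with j by lia. replace (n - (k + j))%nat with (n - k - j)%nat by lia. ring. Qed.

Lemma conv_plus_l c c' e : conv (fun j => c j + c' j) e = fun n => conv c e n + conv c' e n.
Proof. apply functional_extensionality; intros n; unfold conv. rewrite <- sumR_plus. apply sumR_ext; intros; ring. Qed.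

Lemma conv_scal_l x c e : conv (fun j => x * c j) e = fun n => x * conv c e n.
Proof. apply functional_extensionality; intros n; unfold conv. rewrite <- sumR_scal_l. apply sumR_ext; intros; ring. Qed.

Lemma conv_scal_r x c e : conv c (fun j => x * e j) = fun n => x * conv c e n.
Proof. rewrite conv_comm, conv_scal_l, conv_comm. reflexivity. Qed.

Lemma conv_delta_l e : conv delta e = e.
Proof. apply functional_extensionality; intros n; unfold conv. rewrite sumR_first. rewrite sumR_zero. simpl. rewrite Nat.sub_0_r. ring.
  intros; simpl; ring. Qed.

Lemma conv_delta_r e : conv e delta = e.
Proof. rewrite conv_comm; apply conv_delta_l. Qed.

Lemma conv_plus_r c e e' : conv c (fun j => e j + e' j) = fun n => conv c e n + conv c e' n.
Proof. rewrite conv_comm, conv_plus_l. apply functional_extensionality; intros n. rewrite !(conv_comm _ c). reflexivity. Qed.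

Lemma zd_conv c e : zd (conv c e) = fun n => conv (zd c) e n + conv c (zd e) n.
Proof. apply functional_extensionality; intros n; unfold zd, conv. rewrite <- sumR_plus, <- sumR_scal_l.
  apply sumR_ext_lt; intros k Hk. rewrite minus_INR by lia. ring. Qed.

Lemma Pfuel_irrel r b fuel : forall fuel' n, (n <= fuel)%nat -> (n <= fuel')%nat -> Pfuel fuel n r b = Pfuel fuel' n r b.
Proof. induction fuel; intros fuel' n H1 H2.
  - assert (n = 0%nat) by lia; subst. destruct fuel'; reflexivity.
  - destruct n. destruct fuel'; reflexivity.
    destruct fuel' as [|f']. lia. simpl. f_equal. unfold sum_range. apply sumR_ext_lt; intros k Hk.
    f_equal. simpl (1 + k)%nat. apply IHfuel; lia.
Qed.

Lemma P_O (r : R) (b : nat -> R) : P 0 r b = Rpower (b O) r.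
Proof. reflexivity. Qed.

Lemma P_S n r b : P (S n) r b = / (INR (S n) * b O) *
   sumR (S n) (fun j => (INR (S j) * (1 + r) - INR (S n)) * b (S j) * P (n - j)%nat r b).
Proof. unfold P at 1. simpl Pfuel. f_equal. unfold sum_range.
  replace (S (S n) - 1)%nat with (S n) by lia. apply sumR_ext_lt; intros j Hj.
  replace (1 + j)%nat with (S j) by lia. f_equal. unfold P. apply Pfuel_irrel; lia. Qed.

Definition Euler (b Q : nat -> R) (r : R) := forall n, conv b (zd Q) n = r * conv (zd b) Q n.

Lemma EulerF b Q r n : conv b (zd Q) n - r * conv (zd b) Q n =
  sumR (S n) (fun k => (INR (n - k) - r * INR k) * b k * Q (n - k)%nat).
Proof. unfold conv, zd. rewrite <- sumR_scal_l. unfold Rminus. rewrite <- sumR_opp, <- sumR_plus.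
  apply sumR_ext; intros; ring. Qed.

Lemma P_Euler b r : b O <> 0 -> Euler b (fun n => P n r b) r.
Proof. intros Hb n. apply Rminus_diag_uniq. rewrite EulerF. destruct n.
  - simpl. ring.
  - rewrite sumR_first. change (S n - 0)%nat with (S n). rewrite P_S.
    rewrite INR_0, Rmult_0_r, Rminus_0_r.
    match goal with |- ?A * ?B * (/ (?A * ?B) * ?X) + ?Y = 0 =>
      replace (A * B * (/ (A * B) * X)) with X by (field; split; [auto| apply not_0_INR; lia]) end.
    rewrite <- sumR_plus. apply sumR_zero; intros k Hk. simpl (S n - S k)%nat.
    rewrite minus_INR by lia. rewrite !S_INR. ring.
Qed.

Lemma Euler_unique b r Q : b O <> 0 -> Q O = Rpower (b O) r -> Euler b Q r -> forall n, Q n = P n r b.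
Proof. intros Hb H0 HE.
  assert (HP := P_Euler b r Hb).
  assert (forall n, forall j, (j <= n)%nat -> Q j = P j r b).
  { induction n; intros j Hj.
    - assert (j = 0%nat) by lia; subst. rewrite H0; reflexivity.
    - destruct (Nat.eq_dec j (S n)) as [->|]; [|apply IHn; lia].
      assert (E1 := HE (S n)). assert (E2 := HP (S n)).
      apply Rminus_diag_eq in E1. apply Rminus_diag_eq in E2. rewrite EulerF in E1, E2.
      rewrite sumR_first in E1, E2. simpl (S n - 0)%nat in E1, E2.
      rewrite (sumR_ext_lt (S n) (fun j => _ * Q _) (fun j => (INR (S n - S j) - r * INR (S j)) * b (S j) * P (S n - S j)%nat r b)) in E1.
      2:{ intros k Hk. rewrite IHn by (simpl; lia). reflexivity. }
      assert (INR (S n) * b 0%nat * (Q (S n) - P (S n) r b) = 0) by (rewrite INR_0 in *; lra).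
      apply Rmult_integral in H. destruct H as [H|H]; [|lra].
      apply Rmult_integral in H. destruct H as [H|H]; [|contradiction].
      exfalso. revert H. apply not_0_INR. lia. }
  intros n; apply (H n); lia.
Qed.

Lemma Euler_unique_f b r Q : b O <> 0 -> Q O = Rpower (b O) r -> Euler b Q r -> Q = fun n => P n r b.
Proof. intros; apply functional_extensionality; apply Euler_unique; auto. Qed.

Lemma P_add b r s : 0 < b O -> (fun n => P n (r + s) b) = conv (fun n => P n r b) (fun n => P n s b).
Proof. intros Hb. symmetry. apply Euler_unique_f. lra.
  rewrite conv_0, !P_O, Rpower_plus. reflexivity.
  assert (Er := P_Euler b r ltac:(lra)). assert (Es := P_Euler b s ltac:(lra)).
  assert (Er' : conv b (zd (fun n => P n r b)) = fun n => r * conv (zd b) (fun n => P n r b) n) by (apply functional_extensionality; auto).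
  assert (Es' : conv b (zd (fun n => P n s b)) = fun n => s * conv (zd b) (fun n => P n s b) n) by (apply functional_extensionality; auto).
  set (X := fun n => P n r b) in *. set (Y := fun n => P n s b) in *.
  assert (T1 : conv b (conv (zd X) Y) = fun n => r * conv (zd b) (conv X Y) n).
  { rewrite <- conv_assoc, Er', conv_scal_l, conv_assoc. reflexivity. }
  assert (T2 : conv b (conv X (zd Y)) = fun n => s * conv (zd b) (conv X Y) n).
  { rewrite <- conv_assoc, (conv_comm b X), conv_assoc, Es', conv_scal_r.
    rewrite <- conv_assoc, (conv_comm X (zd b)), conv_assoc. reflexivity. }
  intros n. rewrite zd_conv, conv_plus_r, T1, T2. ring.
Qed.

Lemma Rpower_1_l r : Rpower 1 r = 1.
Proof. unfold Rpower. rewrite ln_1, Rmult_0_r, exp_0. reflexivity. Qed.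

Lemma P_zero b : 0 < b O -> (fun n => P n 0 b) = delta.
Proof. intros Hb. symmetry. apply Euler_unique_f. lra. rewrite Rpower_O; auto.
  intros n. rewrite Rmult_0_l. unfold conv. apply sumR_zero. intros k Hk. unfold zd.
  destruct (Nat.eq_dec k n) as [->|]. rewrite Nat.sub_diag. simpl; ring.
  replace (n - k)%nat with (S (n - k - 1)) by lia. simpl; ring. Qed.

Lemma P_one b : 0 < b O -> (fun n => P n 1 b) = b.
Proof. intros Hb. symmetry. apply Euler_unique_f. lra. rewrite Rpower_1; auto.
  intros n. rewrite Rmult_1_l. rewrite conv_comm; reflexivity. Qed.

Definition spread (x : nat -> R) (j : nat) : R := if Nat.even j then x (Nat.div2 j) else 0.
Definition alt (x : nat -> R) (j : nat) : R := (-1) ^ j * x j.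

Lemma even_double i : Nat.even (2 * i) = true /\ Nat.even (S (2 * i)) = false /\ Nat.div2 (2 * i) = i /\ Nat.div2 (S (2 * i)) = i.
Proof. rewrite Nat.div2_succ_double, Nat.div2_double, Nat.even_succ, Nat.even_mul, Nat.odd_mul. simpl. auto. Qed.

Lemma spread_even x i : spread x (2 * i) = x i.
Proof. unfold spread. destruct (even_double i) as [A [B [C D]]]. rewrite A, C; auto. Qed.
Lemma spread_odd x i : spread x (S (2 * i)) = 0.
Proof. unfold spread. destruct (even_double i) as [A [B [C D]]]. rewrite B; auto. Qed.

Lemma parity j : exists i, j = (2 * i)%nat \/ j = S (2 * i).
Proof. destruct (Nat.Even_or_Odd j) as [[i H]|[i H]]; exists i; lia. Qed.

Lemma sumR_S m f : sumR (S m) f = sumR m f + f m.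
Proof. reflexivity. Qed.

Lemma sumR_pairs m F : sumR (2 * m) F = sumR m (fun i => F (2 * i)%nat + F (S (2 * i))).
Proof. induction m. reflexivity. replace (2 * S m)%nat with (S (S (2 * m))) by lia. cbn [sumR]. rewrite IHm. ring. Qed.

Lemma conv_spread x y : conv (spread x) (spread y) = spread (conv x y).
Proof. apply functional_extensionality; intros n. destruct (parity n) as [m [->| ->]]; unfold conv.
  - rewrite spread_even. unfold conv. rewrite sumR_S. rewrite sumR_S. rewrite sumR_pairs. f_equal.
    + apply sumR_ext_lt; intros i Hi. replace (2 * m - 2 * i)%nat with (2 * (m - i))%nat by lia.
      replace (2 * m - S (2 * i))%nat with (S (2 * (m - i - 1)))%nat by lia.
      rewrite !spread_even, spread_odd. ring.
    + rewrite spread_even, !Nat.sub_diag; reflexivity.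
  - rewrite spread_odd. replace (S (S (2 * m))) with (2 * S m)%nat by lia. rewrite sumR_pairs.
    apply sumR_zero; intros i Hi. replace (S (2 * m) - 2 * i)%nat with (S (2 * (m - i))) by lia.
    replace (S (2 * m) - S (2 * i))%nat with (2 * (m - i))%nat by lia.
    rewrite spread_odd, spread_odd. ring.
Qed.

Lemma zd_spread x : zd (spread x) = spread (fun i => 2 * zd x i).
Proof. apply functional_extensionality; intros n. unfold zd. destruct (parity n) as [m [->| ->]].
  - rewrite !spread_even, mult_INR. simpl (INR 2). ring.
  - rewrite !spread_odd. ring. Qed.

Lemma spread_scal k x : spread (fun i => k * x i) = fun n => k * spread x n.
Proof. apply functional_extensionality; intros n. unfold spread. destruct (Nat.even n); ring. Qed.

Lemma P_spread b r : 0 < b O -> (fun n => P n r (spread b)) = spread (fun n => P n r b).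
Proof. intros Hb. symmetry. apply Euler_unique_f.
  change (spread b 0%nat) with (b 0%nat). lra.
  change (spread (fun n => P n r b) 0%nat) with (P 0 r b). reflexivity.
  intros n. rewrite !zd_spread, conv_spread. rewrite (conv_comm (spread _)), conv_spread.
  assert (E := P_Euler b r ltac:(lra)).
  rewrite !conv_scal_r, (conv_comm (fun n => P n r b)).
  assert (E' : conv b (zd (fun n => P n r b)) = fun n => r * conv (zd b) (fun n => P n r b) n) by (apply functional_extensionality; auto).
  rewrite E'. rewrite !spread_scal. ring. Qed.

Lemma alt_sq j : (-1) ^ j * (-1) ^ j = 1.
Proof. rewrite <- Rpow_mult_distr. replace (-1 * -1) with 1 by ring. apply pow1. Qed.

Lemma conv_alt x y : conv (alt x) (alt y) = alt (conv x y).
Proof. apply functional_extensionality; intros n. unfold conv, alt. rewrite <- sumR_scal_l.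
  apply sumR_ext_lt; intros k Hk. replace ((-1) ^ n) with ((-1) ^ k * (-1) ^ (n - k)) by (rewrite <- pow_add; f_equal; lia). ring. Qed.

Lemma zd_alt x : zd (alt x) = alt (zd x).
Proof. apply functional_extensionality; intros n. unfold zd, alt. ring. Qed.

Lemma alt_scal k x : alt (fun i => k * x i) = fun n => k * alt x n.
Proof. apply functional_extensionality; intros n. unfold alt. ring. Qed.

Lemma P_alt b r : 0 < b O -> (fun n => P n r (alt b)) = alt (fun n => P n r b).
Proof. intros Hb. symmetry. apply Euler_unique_f.
  unfold alt; simpl; lra.
  unfold alt; simpl. rewrite !Rmult_1_l. reflexivity.
  intros n. rewrite !zd_alt, !conv_alt.
  assert (E' : conv b (zd (fun n => P n r b)) = fun n => r * conv (zd b) (fun n => P n r b) n) by (apply functional_extensionality; intros; apply P_Euler; lra).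
  rewrite E', alt_scal. reflexivity. Qed.

Lemma P_delta r : (fun n => P n r delta) = delta.
Proof. symmetry. apply Euler_unique_f. simpl; lra. simpl. rewrite Rpower_1_l. reflexivity.
  intros n. assert (zd delta = fun _ => 0). { apply functional_extensionality; intros [|k]; unfold zd; simpl; ring. }
  rewrite H. unfold conv. rewrite !sumR_zero. ring. intros; ring. intros; ring. Qed.

Definition lim0 (F : R -> R) (l : R) : Prop :=
  forall eps, 0 < eps -> exists del, 0 < del /\ forall u, 0 < u < del -> Rabs (F u - l) < eps.
Definition ev (Q : R -> Prop) : Prop := exists del, 0 < del /\ forall u, 0 < u < del -> Q u.

Lemma ev_and (Q1 Q2 : R -> Prop) : ev Q1 -> ev Q2 -> ev (fun u => Q1 u /\ Q2 u).
Proof. intros [d1 [H1 K1]] [d2 [H2 K2]]. exists (Rmin d1 d2). split. apply Rmin_glb_lt; auto.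
  intros u Hu. split; [apply K1|apply K2]; split; try lra; eapply Rlt_le_trans; try apply Hu; [apply Rmin_l|apply Rmin_r]. Qed.

Lemma ev_imp (Q1 Q2 : R -> Prop) : (forall u, 0 < u -> Q1 u -> Q2 u) -> ev Q1 -> ev Q2.
Proof. intros H [d [Hd K]]. exists d; split; auto. intros u Hu; apply H; [lra|]; auto. Qed.

Lemma ev_pos : ev (fun u => 0 < u).
Proof. exists 1; split; [lra|]; intros; lra. Qed.

Lemma ev_lt c : 0 < c -> ev (fun u => u < c).
Proof. exists c; split; auto; intros; lra. Qed.

Lemma lim0_ext F G l : ev (fun u => F u = G u) -> lim0 F l -> lim0 G l.
Proof. intros He H eps Heps. destruct (H eps Heps) as [d [Hd K]].
  destruct (ev_and _ _ He (ex_intro _ d (conj Hd K))) as [d' [Hd' K']].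
  exists d'; split; auto. intros u Hu. destruct (K' u Hu) as [E L]. rewrite <- E; auto. Qed.

Lemma lim0_const k : lim0 (fun _ => k) k.
Proof. intros eps H; exists 1; split; [lra|]. intros. rewrite Rminus_diag, Rabs_R0; auto. Qed.

Lemma lim0_id : lim0 (fun u => u) 0.
Proof. intros eps H; exists eps; split; auto. intros u Hu. rewrite Rminus_0_r, Rabs_pos_eq; lra. Qed.

Lemma lim0_plus F G l m : lim0 F l -> lim0 G m -> lim0 (fun u => F u + G u) (l + m).
Proof. intros HF HG eps He. destruct (HF (eps/2)) as [d1 [H1 K1]]; [lra|]. destruct (HG (eps/2)) as [d2 [H2 K2]]; [lra|].
  exists (Rmin d1 d2); split. apply Rmin_glb_lt; auto. intros u Hu.
  assert (u < d1) by (eapply Rlt_le_trans; [apply Hu|apply Rmin_l]).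
  assert (u < d2) by (eapply Rlt_le_trans; [apply Hu|apply Rmin_r]).
  specialize (K1 u ltac:(lra)). specialize (K2 u ltac:(lra)).
  replace (F u + G u - (l + m)) with ((F u - l) + (G u - m)) by ring.
  eapply Rle_lt_trans; [apply Rabs_triang|]. lra. Qed.

Lemma lim0_mult F G l m : lim0 F l -> lim0 G m -> lim0 (fun u => F u * G u) (l * m).
Proof. intros HF HG eps He.
  set (K := 1 + Rabs l + Rabs m).
  assert (HK : 0 < K) by (unfold K; pose proof (Rabs_pos l); pose proof (Rabs_pos m); lra).
  set (eta := Rmin 1 (eps / K)).
  assert (Heta : 0 < eta) by (apply Rmin_glb_lt; [lra|apply Rdiv_lt_0_compat; lra]).
  assert (E1 : eta <= 1) by apply Rmin_l. assert (E2 : eta <= eps / K) by apply Rmin_r.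
  destruct (HF eta Heta) as [d1 [H1 K1]]. destruct (HG eta Heta) as [d2 [H2 K2]].
  exists (Rmin d1 d2); split. apply Rmin_glb_lt; auto. intros u Hu.
  assert (u < d1) by (eapply Rlt_le_trans; [apply Hu|apply Rmin_l]).
  assert (u < d2) by (eapply Rlt_le_trans; [apply Hu|apply Rmin_r]).
  specialize (K1 u ltac:(lra)). specialize (K2 u ltac:(lra)).
  set (x := Rabs (F u - l)) in *. set (y := Rabs (G u - m)) in *.
  assert (Rabs (F u * G u - l * m) <= x * y + Rabs l * y + Rabs m * x).
  { replace (F u * G u - l * m) with ((F u - l) * (G u - m) + l * (G u - m) + m * (F u - l)) by ring.
    eapply Rle_trans; [apply Rabs_triang|]. rewrite (Rabs_mult m).
    apply Rplus_le_compat_r. eapply Rle_trans; [apply Rabs_triang|]. rewrite !Rabs_mult. unfold x, y; lra. }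
  assert (0 <= x) by apply Rabs_pos. assert (0 <= y) by apply Rabs_pos.
  assert (0 <= Rabs l) by apply Rabs_pos. assert (0 <= Rabs m) by apply Rabs_pos.
  assert (eta * K <= eps) by (apply (Rmult_le_compat_r K) in E2; [|lra]; unfold Rdiv in E2; rewrite Rmult_assoc, Rinv_l in E2; lra).
  assert (x * y <= eta * y) by nra. assert (eta * y < eta) by nra.
  assert (Rabs l * y <= Rabs l * eta) by nra. assert (Rabs m * x <= Rabs m * eta) by nra.
  unfold K in *. nra. Qed.

Lemma lim0_scal k F l : lim0 F l -> lim0 (fun u => k * F u) (k * l).
Proof. intros H. apply (lim0_mult (fun _ => k)); auto. apply lim0_const. Qed.

Lemma lim0_pos F l : lim0 F l -> 0 < l -> ev (fun u => 0 < F u).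
Proof. intros H Hl. destruct (H (l/2)) as [d [Hd K]]; [lra|]. exists d; split; auto.
  intros u Hu. specialize (K u Hu). apply Rabs_lt_between in K. lra. Qed.

Lemma lim0_nz F l : lim0 F l -> l <> 0 -> ev (fun u => F u <> 0 /\ Rabs l / 2 < Rabs (F u)).
Proof. intros H Hl. assert (0 < Rabs l) by (apply Rabs_pos_lt; auto).
  destruct (H (Rabs l/2)) as [d [Hd K]]; [lra|]. exists d; split; auto.
  intros u Hu. specialize (K u Hu).
  assert (Rabs l <= Rabs (F u) + Rabs (F u - l)).
  { replace l with (F u - (F u - l)) at 1 by ring. eapply Rle_trans. apply Rabs_triang. rewrite Rabs_Ropp. lra. }
  split; [|lra]. intros E. rewrite E, Rabs_R0 in *. lra. Qed.

Lemma lim0_inv F l : lim0 F l -> l <> 0 -> lim0 (fun u => / F u) (/ l).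
Proof. intros H Hl eps He. assert (Hl' : 0 < Rabs l) by (apply Rabs_pos_lt; auto).
  destruct (lim0_nz F l H Hl) as [d0 [Hd0 K0]].
  destruct (H (eps * (Rabs l * Rabs l) / 2)) as [d [Hd K]]. { apply Rdiv_lt_0_compat; [|lra]. apply Rmult_lt_0_compat; nra. }
  exists (Rmin d d0); split. apply Rmin_glb_lt; auto. intros u Hu.
  assert (u < d) by (eapply Rlt_le_trans; [apply Hu|apply Rmin_l]).
  assert (u < d0) by (eapply Rlt_le_trans; [apply Hu|apply Rmin_r]).
  specialize (K u ltac:(lra)). destruct (K0 u ltac:(lra)) as [Hz Hb].
  replace (/ F u - / l) with ((l - F u) / (F u * l)) by (field; auto).
  unfold Rdiv. rewrite Rabs_mult, Rabs_inv, Rabs_mult. rewrite <- Rabs_Ropp. replace (- (l - F u)) with (F u - l) by ring.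
  assert (0 < Rabs (F u)) by lra.
  assert (Hpp : 0 < Rabs (F u) * Rabs l) by (apply Rmult_lt_0_compat; lra).
  apply (Rmult_lt_reg_r (Rabs (F u) * Rabs l)). exact Hpp.
  rewrite Rmult_assoc, Rinv_l by lra.
  assert (eps * (Rabs l * Rabs l) / 2 < eps * (Rabs (F u) * Rabs l)).
  { unfold Rdiv. rewrite Rmult_assoc. apply Rmult_lt_compat_l; auto. nra. }
  lra. Qed.

Lemma lim0_unique F l m : lim0 F l -> lim0 F m -> l = m.
Proof. intros H1 H2. apply Rminus_diag_uniq. destruct (Req_dec (l - m) 0); auto. exfalso.
  assert (Hp : 0 < Rabs (l - m) / 2) by (apply Rdiv_lt_0_compat; [apply Rabs_pos_lt|]; lra).
  destruct (H1 _ Hp) as [d1 [Hd1 K1]]. destruct (H2 _ Hp) as [d2 [Hd2 K2]].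
  set (u := Rmin d1 d2 / 2). assert (0 < Rmin d1 d2) by (apply Rmin_glb_lt; auto).
  assert (u < d1) by (pose proof (Rmin_l d1 d2); unfold u; lra).
  assert (u < d2) by (pose proof (Rmin_r d1 d2); unfold u; lra).
  assert (Hu1 : 0 < u < d1) by (split; [unfold u; lra|assumption]). assert (Hu2 : 0 < u < d2) by (split; [unfold u; lra|assumption]). specialize (K1 u Hu1). specialize (K2 u Hu2).
  assert (Rabs (l - m) <= Rabs (F u - m) + Rabs (F u - l)).
  { replace (l - m) with ((F u - m) - (F u - l)) by ring. eapply Rle_trans. apply Rabs_triang. rewrite Rabs_Ropp. lra. }
  lra. Qed.

Lemma lim0_comp rho w : lim0 rho 0 -> lim0 w 0 -> ev (fun u => 0 < w u) -> lim0 (fun u => rho (w u)) 0.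
Proof. intros Hr Hw Hp eps He. destruct (Hr eps He) as [d [Hd K]].
  destruct (Hw d Hd) as [d1 [Hd1 K1]]. destruct (ev_and _ _ Hp (ex_intro _ d1 (conj Hd1 K1))) as [d2 [Hd2 K2]].
  exists d2; split; auto. intros u Hu. destruct (K2 u Hu) as [P1 P2]. apply K.
  rewrite Rminus_0_r, Rabs_pos_eq in P2; lra. Qed.

Lemma lim0_pow F l n : lim0 F l -> lim0 (fun u => F u ^ n) (l ^ n).
Proof. intros H. induction n. simpl; apply lim0_const. simpl. apply lim0_mult; auto. Qed.

Fixpoint xp (F : R -> R) (c : nat -> R) (K : nat) {struct K} : Prop :=
  match K with
  | O => lim0 F (c O)
  | S K' => lim0 F (c O) /\ xp (fun u => (F u - c O) / u) (shift c) K'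
  end.

Lemma xp_lim F c K : xp F c K -> lim0 F (c O).
Proof. destruct K; simpl; tauto. Qed.

Lemma xp_ext_fun K : forall F G c, ev (fun u => F u = G u) -> xp F c K -> xp G c K.
Proof. induction K; simpl; intros F G c He H.
  - eapply lim0_ext; eauto.
  - destruct H as [H1 H2]. split. eapply lim0_ext; eauto.
    eapply IHK; [|apply H2]. eapply ev_imp; [|apply He]. intros u _ E; simpl; rewrite E; auto. Qed.

Lemma xp_ext_coef K : forall F c e, (forall j, (j <= K)%nat -> c j = e j) -> xp F c K -> xp F e K.
Proof. induction K; simpl; intros F c e He H.
  - rewrite <- He by lia; auto.
  - destruct H as [H1 H2]. rewrite <- He by lia. split; auto.
    eapply IHK; [|apply H2]. intros j Hj. unfold shift. apply He. lia. Qed.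

Lemma xp_mono K : forall F c, xp F c (S K) -> xp F c K.
Proof. induction K; simpl; intros F c H. tauto. destruct H as [H1 H2]. split; auto. Qed.

Lemma xp_mono_le K K' F c : (K <= K')%nat -> xp F c K' -> xp F c K.
Proof. induction 1; auto. intros; apply IHle, xp_mono; auto. Qed.

Lemma xp_unique K : forall F c e, xp F c K -> xp F e K -> forall j, (j <= K)%nat -> c j = e j.
Proof. induction K; simpl; intros F c e H1 H2 j Hj.
  - assert (j = 0%nat) by lia; subst. eapply lim0_unique; eauto.
  - destruct H1 as [A1 B1]. destruct H2 as [A2 B2]. assert (E0 : c O = e O) by (eapply lim0_unique; eauto).
    destruct j. auto. rewrite E0 in B1. apply (IHK _ _ _ B1 B2 j). lia. Qed.

Lemma xp_zero K : xp (fun _ => 0) (fun _ => 0) K.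
Proof. induction K; simpl. apply lim0_const. split. apply lim0_const.
  eapply xp_ext_fun; [|apply IHK]. exists 1; split; [lra|]. intros; unfold Rdiv; ring. Qed.

Lemma xp_plus K : forall F G c e, xp F c K -> xp G e K -> xp (fun u => F u + G u) (fun j => c j + e j) K.
Proof. induction K; simpl; intros F G c e H1 H2.
  - apply lim0_plus; auto.
  - destruct H1, H2. split. apply lim0_plus; auto.
    eapply xp_ext_fun; [|apply (IHK _ _ _ _ H0 H2)]. exists 1; split; [lra|]. intros u Hu. field. lra. Qed.

Lemma xp_scal K : forall k F c, xp F c K -> xp (fun u => k * F u) (fun j => k * c j) K.
Proof. induction K; simpl; intros k F c H.
  - apply lim0_scal; auto.
  - destruct H. split. apply lim0_scal; auto.
    eapply xp_ext_fun; [|apply (IHK k _ _ H0)]. exists 1; split; [lra|]. intros u Hu. field. lra. Qed.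

Lemma xp_const K k : xp (fun _ => k) (fun j => k * delta j) K.
Proof. destruct K; simpl. rewrite Rmult_1_r; apply lim0_const. split. rewrite Rmult_1_r; apply lim0_const.
  eapply xp_ext_coef; [|eapply xp_ext_fun; [|apply (xp_zero K)]]. intros j _. unfold shift; simpl; ring.
  exists 1; split; [lra|]. intros; unfold Rdiv; ring. Qed.

Lemma xp_mulpow p K F c : xp F c K -> xp (fun u => u ^ p * F u) (shiftR p c) (p + K).
Proof. intros H. induction p; simpl.
  - eapply xp_ext_coef; [|eapply xp_ext_fun; [|apply H]]. intros j _. unfold shiftR. simpl. rewrite Nat.sub_0_r. auto.
    exists 1; split; [lra|]. intros; ring.
  - split.
    + unfold shiftR; simpl. replace 0 with (0 * (shiftR p c 0%nat)) by ring.
      eapply lim0_ext; [|apply lim0_mult; [apply lim0_id|apply xp_lim in IHp; apply IHp]].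
      exists 1; split; [lra|]; intros; ring.
    + eapply xp_ext_fun; [|apply IHp]. exists 1; split; [lra|]. intros u Hu. change (shiftR (S p) c 0) with 0. field. lra. Qed.

Lemma xp_mult K : forall F G c e, xp F c K -> xp G e K -> xp (fun u => F u * G u) (conv c e) K.
Proof. induction K; simpl; intros F G c e H1 H2.
  - rewrite conv_0. apply lim0_mult; auto.
  - destruct H1 as [A1 B1], H2 as [A2 B2]. split. rewrite conv_0. apply lim0_mult; auto.
    assert (HG : xp G e K) by (apply xp_mono; simpl; auto).
    assert (T := xp_plus _ _ _ _ _ (IHK _ _ _ _ B1 HG) (xp_scal _ (c O) _ _ B2)).
    eapply xp_ext_coef; [|eapply xp_ext_fun; [|apply T]].
    + intros j _. simpl. unfold shift at 3. rewrite conv_S. unfold shift. ring.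
    + exists 1; split; [lra|]. intros u Hu. rewrite conv_0. field. lra. Qed.

Lemma xp_inv K F c q : c O <> 0 -> (forall n, conv c q n = delta n) -> xp F c K -> xp (fun u => / F u) q K.
Proof. intros Hc Hq. assert (Hq0 : q O = / c O).
  { specialize (Hq O). rewrite conv_0 in Hq. simpl in Hq. field_simplify_eq; auto. rewrite <- Hq. ring. }
  induction K; intros H.
  - simpl in *. rewrite Hq0. apply lim0_inv; auto.
  - assert (HK : xp F c K) by (apply xp_mono; auto). specialize (IHK HK).
    simpl in H. destruct H as [A B]. simpl. split. rewrite Hq0. apply lim0_inv; auto.
    assert (T := xp_scal _ (- q O) _ _ (xp_mult _ _ _ _ _ B IHK)).
    eapply xp_ext_coef; [|eapply xp_ext_fun; [|apply T]].
    + intros j _. unfold shift at 2. specialize (Hq (S j)). rewrite conv_S in Hq. simpl in Hq.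
      rewrite Hq0. field_simplify_eq; auto. lra.
    + destruct (lim0_nz F _ A Hc) as [d [Hd Kd]]. exists d; split; auto. intros u Hu.
      destruct (Kd u Hu) as [Hz _]. rewrite Hq0. field. split; auto. split; auto. lra. Qed.

Lemma xp_sumR K N : forall Fs cs, (forall n, (n < N)%nat -> xp (Fs n) (cs n) K) ->
  xp (fun u => sumR N (fun n => Fs n u)) (fun j => sumR N (fun n => cs n j)) K.
Proof. induction N; intros Fs cs H. simpl. apply xp_zero.
  simpl. apply xp_plus. apply IHN; intros; apply H; lia. apply H; lia. Qed.

Lemma xp_small K R : lim0 R 0 -> xp (fun u => u ^ K * R u) (fun _ => 0) K.
Proof. intros H. assert (T := xp_mulpow K 0 R (fun _ => 0) H). rewrite Nat.add_0_r in T.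
  eapply xp_ext_coef; [|apply T]. intros j _. unfold shiftR. destruct (K <=? j)%nat; auto. Qed.

Lemma P_r_eq b r s : r = s -> (fun n => P n r b) = (fun n => P n s b).
Proof. intros ->; reflexivity. Qed.

Lemma P_zero_pt b n : 0 < b O -> P n 0 b = delta n.
Proof. intros H. exact (f_equal (fun g => g n) (P_zero b H)). Qed.

Lemma xp_pow K F c m : 0 < c O -> xp F c K -> xp (fun u => F u ^ m) (fun n => P n (INR m) c) K.
Proof. intros Hc H. induction m.
  - simpl INR. rewrite P_zero by auto. eapply xp_ext_coef; [|eapply xp_ext_fun; [|apply (xp_const K 1)]].
    intros; cbv beta; ring. exists 1; split; [lra|]; intros; simpl; ring.
  - rewrite S_INR, P_add, P_one by auto.
    eapply xp_ext_fun; [|apply (xp_mult _ _ _ _ _ IHm H)]. exists 1; split; [lra|]; intros; simpl; ring. Qed.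

Lemma xp_powinv K F c m : 0 < c O -> xp F c K -> xp (fun u => (/ F u) ^ m) (fun n => P n (- INR m) c) K.
Proof. intros Hc H.
  assert (Hi : xp (fun u => / F u) (fun n => P n (-1) c) K).
  { apply (xp_inv K F c); [lra| |auto]. intros n.
    rewrite <- (P_one c Hc) at 1. rewrite <- P_add by auto. replace (1 + -1) with 0 by ring. apply P_zero_pt; auto. }
  induction m.
  - simpl INR. rewrite Ropp_0, P_zero by auto. eapply xp_ext_coef; [|eapply xp_ext_fun; [|apply (xp_const K 1)]].
    intros; cbv beta; ring. exists 1; split; [lra|]; intros; simpl; ring.
  - rewrite S_INR, Ropp_plus_distr, P_add by auto.
    eapply xp_ext_fun; [|apply (xp_mult _ _ _ _ _ IHm Hi)]. exists 1; split; [lra|]; intros; simpl; ring. Qed.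

Definition coefA (a : nat -> R) (lam : R) (gam eta : nat -> R) (j : nat) : R :=
  lam * sumR (S j) (fun n => a n * shiftR (2 * n) (conv (fun k => P k (2 * INR n) gam) (fun k => P k (- 2 * INR n + 1) eta)) j).

Lemma comp_ex (f : R -> R) (a : nat -> R) (lam : R) (G H : R -> R) (gam eta : nat -> R) K :
  (forall N, lim0 (fun w => (f w - sumR (S N) (fun n => a n * w ^ (2 * n))) / w ^ (2 * N)) 0) ->
  0 < gam O -> 0 < eta O -> xp G gam K -> xp H eta K ->
  xp (fun u => lam * H u * f (u * G u / H u)) (coefA a lam gam eta) K.
Proof. intros Hf Hg He HG HH.
  set (rho := fun w => (f w - sumR (S K) (fun n => a n * w ^ (2 * n))) / w ^ (2 * K)).
  assert (LG := xp_lim _ _ _ HG). assert (LH := xp_lim _ _ _ HH).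
  assert (PG := lim0_pos _ _ LG Hg). assert (PH := lim0_pos _ _ LH He).
  set (w := fun u => u * G u / H u).
  assert (Lw : lim0 w 0).
  { replace 0 with (0 * gam O * / eta O) by ring. unfold w. unfold Rdiv.
    apply lim0_mult. apply lim0_mult. apply lim0_id. exact LG. apply lim0_inv. exact LH. apply Rgt_not_eq; lra. }
  assert (Pw : ev (fun u => 0 < w u)).
  { eapply ev_imp; [|apply (ev_and _ _ ev_pos (ev_and _ _ PG PH))]. intros u _ [A [B C]].
    unfold w. apply Rdiv_lt_0_compat; auto. apply Rmult_lt_0_compat; auto. }
  assert (HT : forall n, (n < S K)%nat -> xp (fun u => lam * a n * (u ^ (2 * n) * (G u ^ (2 * n) * (H u * (/ H u) ^ (2 * n)))))
      (fun j => lam * a n * shiftR (2 * n) (conv (fun k => P k (2 * INR n) gam) (fun k => P k (- 2 * INR n + 1) eta)) j) K).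
  { intros n _. apply xp_scal. apply (xp_mono_le K (2 * n + K)); [lia|]. apply xp_mulpow.
    assert (E1 : (fun k => P k (2 * INR n) gam) = (fun k => P k (INR (2 * n)) gam)).
    { apply P_r_eq. rewrite mult_INR. reflexivity. }
    assert (E2 : (fun k => P k (- 2 * INR n + 1) eta) = conv eta (fun k => P k (- INR (2 * n)) eta)).
    { rewrite <- (P_one eta He) at 1. rewrite <- P_add by auto. apply P_r_eq. rewrite mult_INR. simpl INR. ring. }
    rewrite E1, E2. apply xp_mult. apply xp_pow; auto. apply xp_mult; auto. apply xp_powinv; auto. }
  assert (HR : xp (fun u => u ^ (2 * K) * (lam * H u * (G u / H u) ^ (2 * K) * rho (w u))) (fun _ => 0) K).
  { eapply xp_mono_le; [|apply xp_small]. lia.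
    replace 0 with (lam * eta O * (gam O / eta O) ^ (2 * K) * 0) by ring.
    apply lim0_mult. apply lim0_mult. apply lim0_scal; auto. apply lim0_pow. unfold Rdiv. apply lim0_mult. exact LG. apply lim0_inv. exact LH. apply Rgt_not_eq; lra.
    apply lim0_comp; auto. apply Hf. }
  assert (T := xp_plus _ _ _ _ _ (xp_sumR K (S K) _ _ HT) HR).
  eapply xp_ext_coef; [|eapply xp_ext_fun; [|apply T]].
  - intros j Hj. unfold coefA. rewrite Rplus_0_r. rewrite <- sumR_scal_l.
    rewrite (sumR_extend_le (S j) (S K)); [|lia|].
    + apply sumR_ext; intros; ring.
    + intros n Hn1 Hn2. unfold shiftR. destruct (Nat.leb_spec (2 * n) j). lia. ring.
  - eapply ev_imp; [|apply (ev_and _ _ ev_pos (ev_and _ _ Pw PH))]. intros u _ [Hu [Hw Hh]].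
    assert (Ef : f (w u) = sumR (S K) (fun n => a n * w u ^ (2 * n)) + w u ^ (2 * K) * rho (w u)).
    { unfold rho. field. apply pow_nonzero. lra. }
    fold (w u). rewrite Ef. rewrite Rmult_plus_distr_l. f_equal.
    + rewrite <- sumR_scal_l. apply sumR_ext; intros n. unfold w. unfold Rdiv. rewrite !Rpow_mult_distr. ring.
    + unfold w. unfold Rdiv. rewrite !Rpow_mult_distr. ring.
Qed.

Lemma powZ_lemma w n : 0 < w -> powerRZ (/ w) (1 - 2 * Z.of_nat n) = w ^ (2 * n) * / w.
Proof. intros Hw. rewrite powerRZ_Rpower by (apply Rinv_0_lt_compat; auto).
  replace (IZR (1 - 2 * Z.of_nat n)) with (1 + - INR (2 * n)).
  2:{ rewrite minus_IZR, mult_IZR, <- INR_IZR_INZ, mult_INR. simpl. ring. }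
  rewrite Rpower_plus, Rpower_1 by (apply Rinv_0_lt_compat; auto). rewrite Rpower_Ropp, Rpower_pow by (apply Rinv_0_lt_compat; auto).
  rewrite pow_inv, Rinv_inv. ring. Qed.

Lemma lim_inf_lim0 F : is_lim F p_infty 0 -> lim0 (fun w => F (/ w)) 0.
Proof. intros H eps He. apply is_lim_spec in H. specialize (H (mkposreal eps He)). simpl in H.
  destruct H as [X HX]. exists (/ (Rabs X + 1)). split. apply Rinv_0_lt_compat. pose proof (Rabs_pos X); lra.
  intros w [Hw1 Hw2]. apply HX.
  assert (/ (/ (Rabs X + 1)) < / w). { apply Rinv_lt_contravar; auto. apply Rmult_lt_0_compat; auto. apply Rinv_0_lt_compat. pose proof (Rabs_pos X); lra. }
  rewrite Rinv_inv in H. pose proof (Rle_abs X). lra. Qed.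

Lemma homog_form M s t : homogeneous_mean M -> 0 < s -> 0 < t ->
  M s t = (s + t) / 2 * M (1 - (t - s) / (s + t)) (1 + (t - s) / (s + t)).
Proof. intros HM Hs Ht. rewrite <- HM.
  - f_equal; field; lra.
  - lra.
  - unfold Rdiv. replace (1 - (t - s) * / (s + t)) with (2 * s / (s + t)) by (field; lra). apply Rdiv_lt_0_compat; lra.
  - unfold Rdiv. replace (1 + (t - s) * / (s + t)) with (2 * t / (s + t)) by (field; lra). apply Rdiv_lt_0_compat; lra.
Qed.

Lemma f_expansion M a : homogeneous_mean M -> has_sym_asymp_expansion M a ->
  forall N, lim0 (fun w => (M (1 - w) (1 + w) - sumR (S N) (fun n => a n * w ^ (2 * n))) / w ^ (2 * N)) 0.
Proof. intros HM HE N. specialize (HE 1 N). apply lim_inf_lim0 in HE.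
  eapply lim0_ext; [|apply HE]. exists 1; split; [lra|]. intros w [Hw1 Hw2].
  replace (/ w - 1) with (/ w * (1 - w)) by (field; lra). replace (/ w + 1) with (/ w * (1 + w)) by (field; lra).
  rewrite HM by (try apply Rinv_0_lt_compat; lra).
  unfold sum_range. change (S N - 0)%nat with (S N).
  rewrite (sumR_ext _ _ (fun n => / w * (a n * w ^ (2 * n)))).
  2:{ intros n. simpl (0 + n)%nat. rewrite powZ_lemma by lra. rewrite pow1. ring. }
  rewrite sumR_scal_l, powZ_lemma by lra. field. split. apply pow_nonzero; lra. lra.
Qed.

Lemma a0_one M a : is_mean M -> has_sym_asymp_expansion M a -> a O = 1.
Proof. intros Hm HE. specialize (HE 0 O). apply is_lim_spec in HE.
  apply Rminus_diag_uniq_sym. apply Rabs_eq_0. apply Rle_antisym; [|apply Rabs_pos].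
  apply Rnot_lt_le. intros Hp. specialize (HE (mkposreal _ Hp)). simpl in HE. destruct HE as [X HX].
  set (x := Rabs X + 1). assert (Hx : 0 < x) by (unfold x; pose proof (Rabs_pos X); lra).
  specialize (HX x ltac:(unfold x; pose proof (Rle_abs X); lra)).
  assert (Mx : M (x - 0) (x + 0) = x).
  { rewrite Rminus_0_r, Rplus_0_r. destruct (Hm x x Hx Hx). rewrite Rmin_left, Rmax_left in * by lra. lra. }
  rewrite Mx in HX. unfold sum_range in HX. simpl in HX.
  replace ((x - (0 + a 0%nat * 1 * (x * 1))) / (x * 1) - 0) with (1 - a 0%nat) in HX by (field; lra). lra. Qed.

Lemma sseq_conv a i : sseq a i = / 2 * sumR (S i) (fun n => a n *
   conv (fun k => P k (2 * INR n) (gseq a)) (fun k => P k (- 2 * INR n + 1) (hseq a)) (2 * i - 2 * n)).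
Proof. reflexivity. Qed.

Lemma dseq_conv a i : dseq a i = - / 2 * sumR (S i) (fun n => a n *
   conv (fun k => P k (2 * INR n) (gseq a)) (fun k => P k (- 2 * INR n + 1) (hseq a)) (2 * i + 1 - 2 * n)).
Proof. reflexivity. Qed.

Lemma shiftR_alt p Z j : shiftR (2 * p) (alt Z) j = (-1) ^ j * shiftR (2 * p) Z j.
Proof. unfold shiftR, alt. destruct (Nat.leb_spec (2 * p) j); [|ring].
  replace ((-1) ^ j) with ((-1) ^ (j - 2 * p) * (-1) ^ (2 * p)) by (rewrite <- pow_add; f_equal; lia).
  rewrite pow_1_even. ring. Qed.

Lemma coefA_alt0 a lam g h : 0 < g O -> 0 < h O -> forall j, coefA a lam (alt g) (alt h) j = (-1) ^ j * coefA a lam g h j.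
Proof. intros Hg Hh j. unfold coefA.
  transitivity (lam * ((-1) ^ j * sumR (S j) (fun n => a n * shiftR (2 * n) (conv (fun k => P k (2 * INR n) g) (fun k => P k (- 2 * INR n + 1) h)) j))); [|ring].
  f_equal. rewrite <- sumR_scal_l. apply sumR_ext; intros n.
  rewrite P_alt, (P_alt h) by auto. rewrite conv_alt, shiftR_alt. ring. Qed.

Lemma coefA_alt a lam g h : 0 < g O -> 0 < h O -> forall j, coefA a lam (alt g) (alt h) j = alt (coefA a lam g h) j.
Proof. intros; rewrite coefA_alt0; auto. Qed.

Lemma coefA_delta a j : coefA a 1 delta delta j = spread a j.
Proof. unfold coefA. rewrite Rmult_1_l.
  rewrite (sumR_ext _ _ (fun n => a n * shiftR (2 * n) delta j)).
  2:{ intros n. rewrite !P_delta, conv_delta_l. reflexivity. }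
  destruct (parity j) as [i [-> | ->]].
  - rewrite spread_even. rewrite (sumR_single _ i); [| lia |].
    + unfold shiftR. rewrite Nat.leb_refl, Nat.sub_diag. simpl; ring.
    + intros n Hn Hni. unfold shiftR. destruct (Nat.leb_spec (2 * n) (2 * i)); [|ring].
      replace (2 * i - 2 * n)%nat with (S (2 * i - 2 * n - 1)) by lia. simpl; ring.
  - rewrite spread_odd. apply sumR_zero. intros n Hn. unfold shiftR. destruct (Nat.leb_spec (2 * n) (S (2 * i))); [|ring].
    replace (S (2 * i) - 2 * n)%nat with (S (2 * i - 2 * n)) by lia. simpl; ring.
Qed.

Lemma alpha_even a i : coefA a (/ 2) (gseq a) (hseq a) (2 * i) = sseq a i.
Proof. rewrite sseq_conv. unfold coefA. f_equal.
  rewrite (sumR_extend_le (S i) (S (2 * i))); [|lia|].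
  - apply sumR_ext_lt; intros n Hn. unfold shiftR. destruct (Nat.leb_spec (2 * n) (2 * i)); [reflexivity|lia].
  - intros n Hn1 Hn2. unfold shiftR. destruct (Nat.leb_spec (2 * n) (2 * i)); [lia|ring].
Qed.

Lemma alpha_odd a i : coefA a (/ 2) (gseq a) (hseq a) (S (2 * i)) = - dseq a i.
Proof. rewrite dseq_conv. unfold coefA. rewrite Ropp_mult_distr_l, Ropp_involutive. f_equal.
  rewrite (sumR_extend_le (S i) (S (S (2 * i)))); [|lia|].
  - apply sumR_ext_lt; intros n Hn. unfold shiftR. destruct (Nat.leb_spec (2 * n) (S (2 * i))); [|lia].
    replace (2 * i + 1)%nat with (S (2 * i)) by lia. reflexivity.
  - intros n Hn1 Hn2. unfold shiftR. destruct (Nat.leb_spec (2 * n) (S (2 * i))); [lia|ring].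
Qed.

Lemma gseq_pos a : 0 < gseq a O.
Proof. simpl; lra. Qed.
Lemma hseq_pos a : 0 < hseq a O.
Proof. simpl; lra. Qed.

Lemma P_low b r n : 0 < b O -> r = 0 -> P n r b = delta n.
Proof. intros H ->. apply P_zero_pt; auto. Qed.

Lemma P_one_pt b r n : 0 < b O -> r = 1 -> P n r b = b n.
Proof. intros H ->. exact (f_equal (fun g => g n) (P_one b H)). Qed.

Lemma sseq0 a : a O = 1 -> sseq a O = 1.
Proof. intros Ha. rewrite sseq_conv. simpl sumR. rewrite conv_0. 
  rewrite P_low, P_one_pt; try apply gseq_pos; try apply hseq_pos; simpl; try ring. rewrite Ha. lra. Qed.

Lemma dseq0 a : a O = 1 -> dseq a O = / 2.
Proof. intros Ha. rewrite dseq_conv. simpl sumR. replace (2 * 0 + 1 - 2 * 0)%nat with 1%nat by reflexivity.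
  unfold conv. simpl sumR.
  rewrite !(P_low (gseq a) (2 * 0)) by (try apply gseq_pos; ring).
  rewrite !(P_one_pt (hseq a) (- 2 * 0 + 1)) by (try apply hseq_pos; ring).
  simpl. rewrite Ha. field. Qed.

Lemma gcoef a j : 1 * delta j + shift (spread a) j = gseq a j.
Proof. destruct j. unfold shift, spread. simpl. ring. unfold shift, spread. simpl delta. rewrite Rmult_0_r, Rplus_0_l.
  cbn [Nat.even Nat.div2]. unfold gseq. rewrite Nat.odd_succ. reflexivity. Qed.

Lemma gtcoef a j : 1 * delta j + -1 * shift (spread a) j = alt (gseq a) j.
Proof. unfold alt. rewrite <- gcoef. unfold shift. destruct j. simpl. unfold spread; simpl. ring.
  simpl delta. destruct (parity j) as [i [-> | ->]].
  - replace (S (S (2 * i))) with (2 * S i)%nat by lia. rewrite spread_even, pow_1_odd. ring.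
  - replace (S (S (S (2 * i)))) with (S (2 * S i))%nat by lia. rewrite spread_odd. ring. Qed.

Lemma hcoef a j : a O = 1 -> 1 * delta j + -1 * shiftR 1 (fun j => 1 * delta j) j + spread a j = hseq a j.
Proof. intros Ha. destruct j as [|[|j]].
  - unfold shiftR, spread; simpl. rewrite Ha; ring.
  - unfold shiftR, spread; simpl. ring.
  - unfold shiftR. simpl delta. simpl Nat.leb. cbv iota. simpl (S (S j) - 1)%nat. simpl delta.
    unfold spread, hseq. ring_simplify. reflexivity. Qed.

Lemma htcoef a j : a O = 1 -> 1 * delta j + shiftR 1 (fun j => 1 * delta j) j + spread a j = alt (hseq a) j.
Proof. intros Ha. unfold alt. rewrite <- (hcoef a j Ha). destruct j as [|[|j]].
  - unfold shiftR, spread; simpl. ring.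
  - unfold shiftR, spread; simpl. ring.
  - unfold shiftR. simpl Nat.leb. cbv iota. simpl (S (S j) - 1)%nat. simpl delta.
    destruct (parity j) as [i [-> | ->]].
    + replace (S (S (2 * i))) with (2 * S i)%nat by lia. rewrite spread_even, pow_1_even. ring.
    + replace (S (S (S (2 * i)))) with (S (2 * S i))%nat by lia. rewrite spread_odd. ring. Qed.

Lemma coefA_spread a d s m : 0 < d O -> 0 < s O ->
  coefA a 1 (spread d) (spread s) (2 * m) =
  sumR (S m) (fun n => a n * conv (fun k => P k (2 * INR n) d) (fun k => P k (- 2 * INR n + 1) s) (m - n)).
Proof. intros Hd Hs. unfold coefA. rewrite Rmult_1_l.
  rewrite (sumR_extend_le (S m) (S (2 * m))); [|lia|].
  - apply sumR_ext_lt; intros n Hn. rewrite P_spread, (P_spread s) by auto. rewrite conv_spread.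
    unfold shiftR. destruct (Nat.leb_spec (2 * n) (2 * m)); [|lia].
    replace (2 * m - 2 * n)%nat with (2 * (m - n))%nat by lia. rewrite spread_even. reflexivity.
  - intros n Hn1 Hn2. unfold shiftR. destruct (Nat.leb_spec (2 * n) (2 * m)); [lia|ring].
Qed.

Lemma split_sum m F : (1 <= m)%nat -> sumR (S m) F = F O + sumR (m - 1) (fun j => F (S j)) + F m.
Proof. intros H. rewrite sumR_first. replace m with (S (m - 1)) at 1 by lia. rewrite sumR_S.
  replace (S (m - 1)) with m by lia. ring. Qed.

Lemma final_algebra a m : a O = 1 -> (2 <= m)%nat ->
  a m = sumR (S m) (fun n => a n * conv (fun k => P k (2 * INR n) (dseq a)) (fun k => P k (- 2 * INR n + 1) (sseq a)) (m - n)) ->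
    a m = 2 ^ (2 * m - 1) / (2 ^ (2 * m - 2) - 1) *
      ( / 2 * sum_range 1 (m - 1) (fun n => a n *
            sum_range 0 (2 * m - 2 * n) (fun k =>
              P k (2 * INR n) (gseq a) * P (2 * m - 2 * n - k) (- 2 * INR n + 1) (hseq a)))
        + sum_range 1 (m - 1) (fun n => a n *
            sum_range 0 (m - n) (fun k =>
              P k (2 * INR n) (dseq a) * P (m - n - k) (- 2 * INR n + 1) (sseq a)))).
Proof. intros Ha Hm E.
  assert (Hd : 0 < dseq a O) by (rewrite dseq0; auto; lra).
  assert (Hs : 0 < sseq a O) by (rewrite sseq0; auto; lra).
  unfold sum_range. replace (S (m - 1) - 1)%nat with (m - 1)%nat by lia.
  set (Y1 := sumR (m - 1) _). set (Y2 := sumR (m - 1) _).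
  rewrite split_sum in E by lia. rewrite Nat.sub_0_r, Nat.sub_diag in E.
  assert (Hss := sseq_conv a m). rewrite split_sum in Hss by lia. rewrite Nat.sub_0_r, Nat.sub_diag in Hss.
  rewrite (P_r_eq (dseq a) (2 * INR 0) 0), P_zero, (P_r_eq (sseq a) (- 2 * INR 0 + 1) 1), P_one, conv_delta_l in E by (auto; simpl; ring).
  rewrite (P_r_eq (gseq a) (2 * INR 0) 0), P_zero, (P_r_eq (hseq a) (- 2 * INR 0 + 1) 1), P_one, conv_delta_l in Hss by (auto; try apply gseq_pos; try apply hseq_pos; simpl; ring).
  rewrite conv_0 in E, Hss. rewrite !P_O in E, Hss.
  rewrite dseq0, sseq0 in E by auto. change (gseq a 0%nat) with 1 in Hss. change (hseq a 0%nat) with 2 in Hss.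
  replace (2 * m - 2 * 0)%nat with (2 * m)%nat in Hss by lia.
  replace (hseq a (2 * m)%nat) with (a m) in Hss.
  2:{ replace (2 * m)%nat with (S (S (2 * (m - 1)))) by lia. unfold hseq.
      cbn [Nat.even Nat.div2]. destruct (even_double (m - 1)) as [A1 [_ [A3 _]]]. rewrite A1, A3. f_equal. lia. }
  set (q := 2 ^ (2 * m - 2)).
  assert (Hq : 1 < q) by (apply Rlt_pow_R1; lra || lia).
  assert (E1 : Rpower (/ 2) (2 * INR m) = / (4 * q)).
  { replace (2 * INR m) with (INR (2 * m)) by (rewrite mult_INR; simpl; ring). rewrite Rpower_pow by lra. rewrite pow_inv. f_equal. unfold q.
    replace (2 * m)%nat with (2 + (2 * m - 2))%nat at 1 by lia. rewrite pow_add. simpl; ring. }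
  assert (E2 : Rpower 1 (- 2 * INR m + 1) = 1) by apply Rpower_1_l.
  assert (E3 : Rpower 1 (2 * INR m) = 1) by apply Rpower_1_l.
  assert (E4 : Rpower 2 (- 2 * INR m + 1) = / (2 * q)).
  { replace (- 2 * INR m + 1) with (1 + - INR (2 * m)) by (rewrite mult_INR; simpl; ring).
    rewrite Rpower_plus, Rpower_Ropp, Rpower_1, Rpower_pow by lra. unfold q.
    replace (2 * m)%nat with (2 + (2 * m - 2))%nat at 1 by lia. rewrite pow_add. simpl. field. apply pow_nonzero; lra. }
  assert (E5 : 2 ^ (2 * m - 1) = 2 * q).
  { unfold q. replace (2 * m - 1)%nat with (S (2 * m - 2)) by lia. reflexivity. }
  rewrite E1, E2 in E. rewrite E3, E4 in Hss. rewrite E5.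
  assert (HY1 : Y1 = sumR (m - 1) (fun j => a (S j) * conv (fun k => P k (2 * INR (S j)) (gseq a)) (fun k => P k (- 2 * INR (S j) + 1) (hseq a)) (2 * m - 2 * S j))) by reflexivity.
  assert (HY2 : Y2 = sumR (m - 1) (fun j => a (S j) * conv (fun k => P k (2 * INR (S j)) (dseq a)) (fun k => P k (- 2 * INR (S j) + 1) (sseq a)) (m - S j))) by reflexivity.
  rewrite <- HY1 in Hss. rewrite <- HY2 in E.
  rewrite Hss in E. rewrite Ha in E.
  apply (Rmult_eq_reg_l (q - 1)); [|lra]. field_simplify; [|lra]. 
  assert (Hq0 : q <> 0) by lra.
  assert (E' : 2 * q * a m = q * a m + q * Y1 + a m + 2 * q * Y2).
  { rewrite E at 1. field. auto. }
  lra. Qed.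

Lemma xp_one K : xp (fun _ => 1) delta K.
Proof. eapply xp_ext_coef; [|apply (xp_const K 1)]. intros; cbv beta; ring. Qed.

Lemma xp_idf K : xp (fun u => u) (shiftR 1 (fun j => 1 * delta j)) K.
Proof. apply (xp_mono_le K (1 + K)); [lia|]. eapply xp_ext_fun; [|apply (xp_mulpow 1 K _ _ (xp_const K 1))].
  exists 1; split; [lra|]. intros; simpl; ring. Qed.

Theorem theorem3p2 (M : R -> R -> R) (a : nat -> R) :
  is_mean M -> symmetric_mean M -> homogeneous_mean M -> stable_mean M ->
  has_sym_asymp_expansion M a ->
  a 0%nat = 1 /\
  forall m : nat, (2 <= m)%nat ->
    a m = 2 ^ (2 * m - 1) / (2 ^ (2 * m - 2) - 1) *
      ( / 2 * sum_range 1 (m - 1) (fun n => a n *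
            sum_range 0 (2 * m - 2 * n) (fun k =>
              P k (2 * INR n) (gseq a) * P (2 * m - 2 * n - k) (- 2 * INR n + 1) (hseq a)))
        + sum_range 1 (m - 1) (fun n => a n *
            sum_range 0 (m - n) (fun k =>
              P k (2 * INR n) (dseq a) * P (m - n - k) (- 2 * INR n + 1) (sseq a)))).
Proof.
  intros Hm Hsym Hh Hst HE.
  assert (Ha0 := a0_one M a Hm HE). split; [exact Ha0|]. intros m Hm2.
  apply final_algebra; auto.
  assert (Hf := f_expansion M a Hh HE).
  set (f := fun w => M (1 - w) (1 + w)) in *.
  assert (Xf : forall K, xp f (spread a) K).
  { intros K. assert (T := comp_ex f a 1 (fun _ => 1) (fun _ => 1) delta delta K Hf ltac:(simpl; lra) ltac:(simpl; lra) (xp_one K) (xp_one K)).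
    eapply xp_ext_coef; [|eapply xp_ext_fun; [|apply T]].
    - intros j _. apply coefA_delta.
    - exists 1; split; [lra|]. intros u Hu. replace (u * 1 / 1) with u by field. ring. }
  assert (Xsh : forall K, xp (fun u => (f u - spread a O) / u) (shift (spread a)) K).
  { intros K. exact (proj2 (Xf (S K))). }
  set (G := fun u => 1 + (f u - 1) / u).
  set (H := fun u => 1 + -1 * u + f u).
  set (Gt := fun u => 1 + -1 * ((f u - 1) / u)).
  set (Ht := fun u => 1 + u + f u).
  assert (XG : forall K, xp G (gseq a) K).
  { intros K. eapply xp_ext_coef; [|eapply xp_ext_fun; [|apply (xp_plus _ _ _ _ _ (xp_const K 1) (Xsh K))]].
    - intros j _. apply gcoef.
    - exists 1; split; [lra|]. intros u Hu. unfold G. change (spread a O) with (a O). rewrite Ha0. reflexivity. }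
  assert (XGt : forall K, xp Gt (alt (gseq a)) K).
  { intros K. eapply xp_ext_coef; [|eapply xp_ext_fun; [|apply (xp_plus _ _ _ _ _ (xp_const K 1) (xp_scal _ (-1) _ _ (Xsh K)))]].
    - intros j _. apply gtcoef.
    - exists 1; split; [lra|]. intros u Hu. unfold Gt. change (spread a O) with (a O). rewrite Ha0. reflexivity. }
  assert (XH : forall K, xp H (hseq a) K).
  { intros K. eapply xp_ext_coef; [|eapply xp_ext_fun; [|apply (xp_plus _ _ _ _ _ (xp_plus _ _ _ _ _ (xp_const K 1) (xp_scal _ (-1) _ _ (xp_idf K))) (Xf K))]].
    - intros j _. apply hcoef; auto.
    - exists 1; split; [lra|]. intros u Hu. reflexivity. }
  assert (XHt : forall K, xp Ht (alt (hseq a)) K).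
  { intros K. eapply xp_ext_coef; [|eapply xp_ext_fun; [|apply (xp_plus _ _ _ _ _ (xp_plus _ _ _ _ _ (xp_const K 1) (xp_idf K)) (Xf K))]].
    - intros j _. apply htcoef; auto.
    - exists 1; split; [lra|]. intros u Hu. reflexivity. }
  set (alpha := coefA a (/ 2) (gseq a) (hseq a)).
  set (A := fun u => / 2 * H u * f (u * G u / H u)).
  set (B := fun u => / 2 * Ht u * f (u * Gt u / Ht u)).
  assert (XA : forall K, xp A alpha K).
  { intros K. apply comp_ex; auto. apply gseq_pos. apply hseq_pos. }
  assert (Hag : 0 < alt (gseq a) O) by (unfold alt; simpl; lra).
  assert (Hah : 0 < alt (hseq a) O) by (unfold alt; simpl; lra).
  assert (XB : forall K, xp B (alt alpha) K).
  { intros K. eapply xp_ext_coef; [|apply (comp_ex f a (/ 2) Gt Ht (alt (gseq a)) (alt (hseq a)) K Hf Hag Hah (XGt K) (XHt K))].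
    intros j _. unfold alpha. apply coefA_alt. apply gseq_pos. apply hseq_pos. }
  set (Sf := fun u => / 2 * (A u + B u)).
  assert (XS : forall K, xp Sf (spread (sseq a)) K).
  { intros K. eapply xp_ext_coef; [|apply (xp_scal _ _ _ _ (xp_plus _ _ _ _ _ (XA K) (XB K)))].
    intros j _. unfold alt. destruct (parity j) as [i [-> | ->]].
    - rewrite pow_1_even, spread_even. unfold alpha. rewrite alpha_even. field.
    - rewrite pow_1_odd, spread_odd. ring. }
  set (c0 := / 2 * (alt alpha O + -1 * alpha O)).
  set (D := fun u => (/ 2 * (B u + -1 * A u) - c0) / u).
  assert (XD : forall K, xp D (spread (dseq a)) K).
  { intros K. assert (T := proj2 (xp_scal _ (/ 2) _ _ (xp_plus _ _ _ _ _ (XB (S K)) (xp_scal _ (-1) _ _ (XA (S K)))))).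
    eapply xp_ext_coef; [|apply T]. intros j _. unfold shift, alt. destruct (parity j) as [i [-> | ->]].
    - rewrite pow_1_odd, spread_even. unfold alpha. rewrite alpha_odd. field.
    - replace (S (S (2 * i))) with (2 * S i)%nat by lia. rewrite pow_1_even, spread_odd. ring. }
  assert (Hd0 : 0 < spread (dseq a) O) by (change (spread (dseq a) O) with (dseq a O); rewrite dseq0; auto; lra).
  assert (Hs0 : 0 < spread (sseq a) O) by (change (spread (sseq a) O) with (sseq a O); rewrite sseq0; auto; lra).
  set (Out := fun u => 1 * Sf u * f (u * D u / Sf u)).
  assert (XO : xp Out (coefA a 1 (spread (dseq a)) (spread (sseq a))) (2 * m)).
  { apply comp_ex; auto. }
  assert (Hc0 : c0 = 0) by (unfold c0, alt; simpl; ring).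
  assert (Hev : ev (fun u => Out u = f u)).
  { exists 1; split; [lra|]. intros u [Hu1 Hu2].
    assert (Hmin : forall x y, 0 < x -> 0 < y -> 0 < M x y).
    { intros x y Hx Hy. destruct (Hm x y Hx Hy) as [L _]. assert (0 < Rmin x y) by (apply Rmin_pos; auto). lra. }
    set (fu := f u). assert (Hfu : 0 < fu) by (apply Hmin; lra).
    assert (EA : A u = M (1 - u) fu).
    { rewrite (homog_form M (1 - u) fu Hh) by lra. unfold A, f, H, G. fold fu.
      replace (u * (1 + (fu - 1) / u) / (1 + -1 * u + fu)) with ((fu - (1 - u)) / (1 - u + fu)) by (field; lra).
      replace (/ 2 * (1 + -1 * u + fu)) with ((1 - u + fu) / 2) by field. reflexivity. }
    assert (EB : B u = M fu (1 + u)).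
    { rewrite (homog_form M fu (1 + u) Hh) by lra. unfold B, f, Ht, Gt. fold fu.
      replace (u * (1 + -1 * ((fu - 1) / u)) / (1 + u + fu)) with ((1 + u - fu) / (fu + (1 + u))) by (field; lra).
      replace (/ 2 * (1 + u + fu)) with ((fu + (1 + u)) / 2) by field. reflexivity. }
    assert (HA : 0 < A u) by (rewrite EA; apply Hmin; lra).
    assert (HB : 0 < B u) by (rewrite EB; apply Hmin; lra).
    assert (Est : fu = M (A u) (B u)).
    { rewrite EA, EB. unfold fu, f. apply Hst; lra. }
    rewrite Est, (homog_form M (A u) (B u) Hh HA HB). unfold Out, Sf, D. rewrite Hc0.
    replace (u * ((/ 2 * (B u + -1 * A u) - 0) / u) / (/ 2 * (A u + B u))) with ((B u - A u) / (A u + B u)) by (field; lra).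
    unfold f. replace (1 * (/ 2 * (A u + B u))) with ((A u + B u) / 2) by field. reflexivity. }
  assert (U := xp_unique (2 * m)%nat f _ _ (Xf (2 * m)%nat) (xp_ext_fun _ _ _ _ Hev XO) (2 * m)%nat (le_n _)).
  rewrite spread_even, coefA_spread in U by (try (change (dseq a O) with (spread (dseq a) O)); try (change (sseq a O) with (spread (sseq a) O)); auto).
  exact U.
Qed.
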